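(* Let $(\mathfrak{g},[\cdot,\cdot]_{\mathfrak{g}})$ be a Leibniz algebra over a field $\mathbf{K}$, $(V;\rho^L,\rho^R)$ a representation, $T:V\to\mathfrak{g}$ a relative Rota-Baxter operator, and $T_t=\sum_{i=0}^n\mathfrak{T}_it^i$ an order $n$ deformation of $T$. Then $T_t$ is extendable if and only if the obstruction class $[\mathrm{Ob}_T]\in\mathcal{H}^2(V,\mathfrak{g})$ is trivial, where $\mathrm{Ob}_T(u,v)=\sum_{i+j=n+1,\ i,j\ge1}\big([\mathfrak{T}_iu,\mathfrak{T}_jv]_{\mathfrak{g}}-\mathfrak{T}_i(\rho^L(\mathfrak{T}_ju)v+\rho^R(\mathfrak{T}_jv)u)\big)$ for $u,v\in V$.
   Context: A Leibniz algebra is a vector space $\mathfrak{g}$ with bilinear $[\cdot,\cdot]_{\mathfrak{g}}$ satisfying $[x,[y,z]_{\mathfrak{g}}]_{\mathfrak{g}}=[[x,y]_{\mathfrak{g}},z]_{\mathfrak{g}}+[y,[x,z]_{\mathfrak{g}}]_{\mathfrak{g}}$. A representation $(V;\rho^L,\rho^R)$: linear $\rho^L,\rho^R:\mathfrak{g}\to\mathfrak{gl}(V)$ with $\rho^L([x,y]_{\mathfrak{g}})=[\rho^L(x),\rho^L(y)]$, $\rho^R([x,y]_{\mathfrak{g}})=[\rho^L(x),\rho^R(y)]$, $\rho^R(y)\rho^L(x)=-\rho^R(y)\rho^R(x)$. A relative Rota-Baxter operator is a linear $T:V\to\mathfrak{g}$ with $[Tv_1,Tv_2]_{\mathfrak{g}}=T(\rho^L(Tv_1)v_2+\rho^R(Tv_2)v_1)$.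 Cohomology of $T$: $C^n(V,\mathfrak{g})=\mathrm{Hom}(\otimes^nV,\mathfrak{g})$, $C^0=\mathfrak{g}$, $\partial_T:C^n\to C^{n+1}$, $(\partial_Tf)(v_1,\dots,v_{n+1})=\sum_{i=1}^n(-1)^{i+1}[Tv_i,f(v_1,\dots,\hat v_i,\dots,v_{n+1})]_{\mathfrak{g}}-\sum_{i=1}^n(-1)^{i+1}T\rho^R(f(v_1,\dots,\hat v_i,\dots,v_{n+1}))v_i+(-1)^{n+1}[f(v_1,\dots,v_n),Tv_{n+1}]_{\mathfrak{g}}+(-1)^nT\rho^L(f(v_1,\dots,v_n))v_{n+1}+\sum_{1\le i<j\le n+1}(-1)^if(v_1,\dots,\hat v_i,\dots,v_{j-1},\rho^L(Tv_i)v_j+\rho^R(Tv_j)v_i,v_{j+1},\dots,v_{n+1})$; $\mathcal{Z}^k=\ker\partial_T\cap C^k$, $\mathcal{B}^k=\partial_T(C^{k-1})$, $\mathcal{H}^k=\mathcal{Z}^k/\mathcal{B}^k$. (The 2-cochain $\mathrm{Ob}_T$ is a 2-cocycle, so $[\mathrm{Ob}_T]$ is defined.) An order $n$ deformation of $T$ is $T_t=\sum_{i=0}^n\mathfrak{T}_it^i$ with $\mathfrak{T}_0=T$, $\mathfrak{T}_i\in\mathrm{Hom}(V,\mathfrak{g})$, viewed as a $\mathbf{K}[t]/(t^{n+1})$-module map $V[t]/(t^{n+1})\to\mathfrak{g}[t]/(t^{n+1})$ (bracket and $\rho^L,\rho^R$ extended $\mathbf{K}[t]/(t^{n+1})$-bilinearly),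 such that $[T_t(u),T_t(v)]_{\mathfrak{g}}=T_t(\rho^L(T_t(u))v+\rho^R(T_t(v))u)$ for all $u,v\in V$. It is extendable if there is $\mathfrak{T}_{n+1}\in\mathrm{Hom}(V,\mathfrak{g})$ with $T_t+\mathfrak{T}_{n+1}t^{n+1}$ an order $n+1$ deformation of $T$. *)

(* Defs.v *)
From HB Require Import structures.
From mathcomp Require Import all_boot all_order all_algebra.
Set Implicit Arguments. Unset Strict Implicit. Unset Printing Implicit Defensive.
Import Order.TTheory GRing.Theory.
Local Open Scope ring_scope.

Section LeibnizRB.
Variables (K : fieldType) (g V : lmodType K).

Definition bilinear_map (A B C : lmodType K) (b : A -> B -> C) : Prop :=
  (forall y, linear (b^~ y)) /\ (forall x, linear (b x)).

Definition leibniz_algebra (br : g -> g -> g) : Prop :=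
  bilinear_map br /\
  forall x y z, br x (br y z) = br (br x y) z + br y (br x z).

Definition representation (br : g -> g -> g) (rhoL rhoR : g -> V -> V) : Prop :=
  bilinear_map rhoL /\ bilinear_map rhoR /\
  (forall x y v, rhoL (br x y) v = rhoL x (rhoL y v) - rhoL y (rhoL x v)) /\
  (forall x y v, rhoR (br x y) v = rhoL x (rhoR y v) - rhoR y (rhoL x v)) /\
  (forall x y v, rhoR y (rhoL x v) = - rhoR y (rhoR x v)).

Definition relative_RB (br : g -> g -> g) (rhoL rhoR : g -> V -> V) (T : V -> g)
  : Prop :=
  linear T /\
  forall v1 v2, br (T v1) (T v2) = T (rhoL (T v1) v2 + rhoR (T v2) v1).

(* n-cochains: maps (lists of n vectors) -> g, multilinear on lists of size n.
   Only the values on lists of size n matter. *)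
Definition multilinear (n : nat) (f : seq V -> g) : Prop :=
  forall (vs : seq V), size vs = n -> forall i, (i < n)%N ->
  forall (a : K) (x y : V),
    f (set_nth 0 vs i (a *: x + y)) = a *: f (set_nth 0 vs i x) + f (set_nth 0 vs i y).

Definition drop_nth (i : nat) (vs : seq V) : seq V := take i vs ++ drop i.+1 vs.

(* The coboundary operator d_T : C^n -> C^(n+1) (indices shifted to 0-based). *)
Definition dT (br : g -> g -> g) (rhoL rhoR : g -> V -> V) (T : V -> g)
  (n : nat) (f : seq V -> g) (vs : seq V) : g :=
  let v := fun i => nth 0 vs i in
  \sum_(0 <= i < n) ((-1) ^+ i *: br (T (v i)) (f (drop_nth i vs)))
  - \sum_(0 <= i < n) ((-1) ^+ i *: T (rhoR (f (drop_nth i vs)) (v i)))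
  + (-1) ^+ n.+1 *: br (f (take n vs)) (T (v n))
  + (-1) ^+ n *: T (rhoL (f (take n vs)) (v n))
  + \sum_(0 <= i < n.+1) \sum_(i.+1 <= j < n.+1)
      ((-1) ^+ i.+1 *:
         f (drop_nth i (set_nth 0 vs j (rhoL (T (v i)) (v j) + rhoR (T (v j)) (v i))))).

Definition coboundary (br : g -> g -> g) (rhoL rhoR : g -> V -> V) (T : V -> g)
  (k : nat) (f : seq V -> g) : Prop :=
  exists h : seq V -> g, multilinear k.-1 h /\
    forall vs : seq V, size vs = k -> f vs = dT br rhoL rhoR T k.-1 h vs.

(* Order n deformation T_t = sum_{i<=n} Ts i t^i, written out coefficientwise
   in K[t]/(t^(n+1)). *)
Definition order_deformation (br : g -> g -> g) (rhoL rhoR : g -> V -> V)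
  (T : V -> g) (n : nat) (Ts : nat -> V -> g) : Prop :=
  Ts 0%N = T /\ (forall i, (i <= n)%N -> linear (Ts i)) /\
  forall (k : nat), (k <= n)%N -> forall u v : V,
    \sum_(0 <= i < k.+1) br (Ts i u) (Ts (k - i)%N v)
    = \sum_(0 <= i < k.+1) Ts i (rhoL (Ts (k - i)%N u) v + rhoR (Ts (k - i)%N v) u).

Definition extendable (br : g -> g -> g) (rhoL rhoR : g -> V -> V)
  (T : V -> g) (n : nat) (Ts : nat -> V -> g) : Prop :=
  exists Tn1 : V -> g, linear Tn1 /\
    order_deformation br rhoL rhoR T n.+1
      (fun i => if i == n.+1 then Tn1 else Ts i).

Definition Ob (br : g -> g -> g) (rhoL rhoR : g -> V -> V)
  (n : nat) (Ts : nat -> V -> g) (u v : V) : g :=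
  \sum_(1 <= i < n.+1)
    (br (Ts i u) (Ts (n.+1 - i)%N v)
     - Ts i (rhoL (Ts (n.+1 - i)%N u) v + rhoR (Ts (n.+1 - i)%N v) u)).

Definition Ob_cochain br rhoL rhoR n Ts : seq V -> g :=
  fun vs => Ob br rhoL rhoR n Ts (nth 0 vs 0) (nth 0 vs 1).

End LeibnizRB.

(* Main.v *)
Require Import Defs.
From HB Require Import structures.
From mathcomp Require Import all_boot all_order all_algebra.
Import GRing.Theory.
Local Open Scope ring_scope.
Lemma dT1 (K : fieldType) (g V : lmodType K)
  (br : g -> g -> g) (rhoL rhoR : g -> V -> V) (T : V -> g) h u v :
  dT br rhoL rhoR T 1 h [:: u; v] =
  br (T u) (h [:: v]) - T (rhoR (h [:: v]) u) + br (h [:: u]) (T v)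
  - T (rhoL (h [:: u]) v) - h [:: rhoL (T u) v + rhoR (T v) u].
Proof.
rewrite /dT unlock /= /drop_nth /=.
rewrite expr0 expr1 !scale1r scaleN1r !addr0.
by rewrite -signr_odd /= expr0 scale1r !scaleN1r.
Qed.

Section L.
Variables (K : fieldType) (A B : lmodType K) (f : A -> B).
Hypothesis hf : linear f.
Lemma linD x y : f (x + y) = f x + f y.
Proof. by rewrite -[x in LHS]scale1r hf scale1r. Qed.
Lemma lin0 : f 0 = 0.
Proof.
have := linD 0 0; rewrite addr0 => /(congr1 (fun z => z - f 0)).
by rewrite subrr addrK.
Qed.
Lemma linN x : f (- x) = - f x.
Proof. by rewrite -[- x]addr0 -scaleN1r hf lin0 addr0 scaleN1r. Qed.
End L.
Arguments linD {K A B f} hf x y.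
Arguments lin0 {K A B f} hf.
Arguments linN {K A B f} hf x.

Lemma ACX (G : zmodType) (a b c d e S1 S2 : G) :
  a + S1 + b - c - d - S2 - e = S1 - S2 + a - d + b - c - e.
Proof.
congr (_ - e).
rewrite [a + S1]addrC [S1 + a + b - c - d - S2]addrAC [S1 + a + b - c - S2]addrAC [S1 + a + b - S2]addrAC [S1 + a - S2]addrAC.
by rewrite [_ + b - c - d]addrAC [_ + b - d]addrAC.
Qed.

Lemma core (K : fieldType) (g V : lmodType K)
  (br : g -> g -> g) (rhoL rhoR : g -> V -> V) (T : V -> g)
  (n : nat) (Ts : nat -> V -> g) (Tn1 : V -> g) u v :
  bilinear_map br -> bilinear_map rhoL -> bilinear_map rhoR -> linear T ->
  Ts 0%N = T ->
  let Ts' := fun i => if i == n.+1 then Tn1 else Ts i in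
  \sum_(0 <= i < n.+2) br (Ts' i u) (Ts' (n.+1 - i)%N v)
  - \sum_(0 <= i < n.+2) Ts' i (rhoL (Ts' (n.+1 - i)%N u) v + rhoR (Ts' (n.+1 - i)%N v) u)
  = Ob br rhoL rhoR n Ts u v
    - dT br rhoL rhoR T 1 (fun vs => - Tn1 (nth 0 vs 0)) [:: u; v].
Proof.
move=> [brl brr] [rLl rLr] [rRl rRr] Tl T0 Ts'.
rewrite dT1 !(@big_ltn _ _ _ 0 n.+2) // !(big_nat_recr n.+1 1) //=.
rewrite /Ob sumrB ?subn0 ?subnn /Ts' /= ?eqxx T0.
have H1 : forall i, (1 <= i < n.+1)%N -> (i == n.+1) = false.
  by move=> i /andP[_ i2]; rewrite ltn_eqF.
have H2 : forall i, (1 <= i < n.+1)%N -> ((n.+1 - i)%N == n.+1) = false.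
  move=> i /andP[i1 _]; apply/negbTE; rewrite neq_ltn; apply/orP; left.
  by rewrite ltn_subrL i1.
rewrite (@eq_big_nat _ _ _ 1 n.+1 (fun i => br ((if i == n.+1 then Tn1 else Ts i) u) ((if (n.+1 - i)%N == n.+1 then Tn1 else Ts (n.+1 - i)%N) v)) (fun i => br (Ts i u) (Ts (n.+1-i)%N v)));
  last by move=> i Hi; rewrite H1 // H2.
rewrite (@eq_big_nat _ _ _ 1 n.+1 (fun i => (if i == n.+1 then Tn1 else Ts i) (rhoL ((if (n.+1 - i)%N == n.+1 then Tn1 else Ts (n.+1 - i)%N) u) v + rhoR ((if (n.+1 - i)%N == n.+1 then Tn1 else Ts (n.+1 - i)%N) v) u)) (fun i => Ts i (rhoL (Ts (n.+1 - i)%N u) v + rhoR (Ts (n.+1 - i)%N v) u)));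
  last by move=> i Hi; rewrite H1 // H2.
rewrite (linN (brr _)) (linN (rRl _)) (linN (brl _)) (linN (rLl _)) !(linD Tl) opprK.
set S1 := \sum_(1 <= i < n.+1) _.
set S2 := \sum_(1 <= i < n.+1) _.
rewrite !(linN Tl) !opprK.
set a := br (T u) (Tn1 v). set b := br (Tn1 u) (T v). set c := T (rhoL (Tn1 u) v).
set d := T (rhoR (Tn1 v) u). set e := Tn1 _.
rewrite !opprD !opprK !addrA.
exact: ACX.
Qed.

Theorem theorem3p26 (K : fieldType) (g V : lmodType K)
  (br : g -> g -> g) (rhoL rhoR : g -> V -> V) (T : V -> g)
  (n : nat) (Ts : nat -> V -> g) :
  leibniz_algebra br ->
  representation br rhoL rhoR ->
  relative_RB br rhoL rhoR T ->
  order_deformation br rhoL rhoR T n Ts ->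
  (extendable br rhoL rhoR T n Ts <->
   coboundary br rhoL rhoR T 2 (Ob_cochain br rhoL rhoR n Ts)).
Proof.
move=> [brb _] [rLb [rRb _]] [Tl _] [T0 [Tsl Tsdef]].
split.
- case=> Tn1 [Tn1l [_ [_ Hdef]]].
  exists (fun vs => - Tn1 (nth 0 vs 0)); split.
  + move=> [|w [|? ?]] //= _ [|i] // _ a x y.
    by rewrite Tn1l opprD scalerN.
  + move=> [|u [|v [|? ?]]] //= _.
    have C := @core _ _ _ br rhoL rhoR T n Ts Tn1 u v brb rLb rRb Tl T0.
    have E := Hdef n.+1 (leqnn _) u v.
    move: C; rewrite /= E subrr => /esym/eqP; rewrite subr_eq0 => /eqP.
    by rewrite /Ob_cochain.
- case=> h [hm hdef].
  have hl : forall a x y, h [:: a *: x + y] = a *: h [:: x] + h [:: y].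
    by move=> a x y; exact: (hm [:: x] erefl 0%N isT a x y).
  exists (fun v => - h [:: v]); split.
    by move=> a x y /=; rewrite hl opprD scalerN.
  split; first by rewrite /= T0.
  split.
    move=> i Hi /=; case: eqP => [_|/eqP Hne].
      by move=> a x y /=; rewrite hl opprD scalerN.
    by apply: Tsl; rewrite -ltnS ltn_neqAle Hne Hi.
  move=> k; rewrite leq_eqVlt => /orP[/eqP -> | Hk] u v.
    have C := @core _ _ _ br rhoL rhoR T n Ts (fun v => - h [:: v]) u v brb rLb rRb Tl T0.
    apply/eqP; rewrite -subr_eq0; apply/eqP; move: C => /= ->.
    have := hdef [:: u; v] erefl; rewrite /Ob_cochain /= => ->.
    by rewrite !dT1 /= !opprK subrr.
  rewrite ltnS in Hk.
  have F : forall i, (0 <= i < k.+1)%N -> (i == n.+1) = false /\ ((k - i)%N == n.+1) = false.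
    move=> i /andP[_ Hi]; split; apply/negbTE; rewrite neq_ltn; apply/orP; left.
      by rewrite (leq_ltn_trans _ (leq_ltn_trans Hk (ltnSn n))) // -ltnS.
    by rewrite ltnS (leq_trans (leq_subr _ _) Hk).
  rewrite (@eq_big_nat _ _ _ 0 k.+1 (fun i => br ((if i == n.+1 then (fun v => - h [:: v]) else Ts i) u) ((if (k - i)%N == n.+1 then (fun v => - h [:: v]) else Ts (k - i)%N) v)) (fun i => br (Ts i u) (Ts (k - i)%N v))); last first.
    by move=> i Hi /=; case: (F i Hi) => -> ->.
  rewrite (@eq_big_nat _ _ _ 0 k.+1 (fun i => (if i == n.+1 then (fun v => - h [:: v]) else Ts i) (rhoL ((if (k - i)%N == n.+1 then (fun v => - h [:: v]) else Ts (k - i)%N) u) v + rhoR ((if (k - i)%N == n.+1 then (fun v => - h [:: v]) else Ts (k - i)%N) v) u)) (fun i => Ts i (rhoL (Ts (k - i)%N u) v + rhoR (Ts (k - i)%N v) u))); last first.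
    by move=> i Hi /=; case: (F i Hi) => -> ->.
  exact: Tsdef.
Qed.
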